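(* Let $G$ be a finite connected simple graph and let $\overrightarrow{G}$ be the directed graph obtained by replacing every edge $xy$ of $G$ by the two directed edges $\overrightarrow{xy}$ and $\overrightarrow{yx}$. Then the complex $\Delta(\overrightarrow{G})$ is pure if and only if $\mathrm{diam}(G)\leqslant 2$.
   Context: For a finite directed graph $D$, the complex of directed trees $\Delta(D)$ has the directed edges of $D$ as vertices, and its faces are the edge sets of directed forests in $D$ (vertex-disjoint unions of rooted directed trees; equivalently, edge sets in which every vertex has in-degree at most $1$ and there is no directed cycle). A simplicial complex is pure if all its maximal faces have the same dimension. $\mathrm{diam}(G)$ is the greatest distance between two vertices of $G$. *)

(* Defs.v *)
From mathcomp Require Import all_boot.
Set Implicit Arguments. Unset Strict Implicit. Unset Printing Implicit Defensive.

Definition simple_graph (T : finType) (e : rel T) : Prop :=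
  symmetric e /\ irreflexive e.

Definition connected_graph (T : finType) (e : rel T) : Prop :=
  forall x y : T, connect e x y.

Definition dist_le (T : finType) (e : rel T) (x y : T) (k : nat) : Prop :=
  exists p : seq T, [/\ path e x p, last x p = y & size p <= k].

Definition diam_le (T : finType) (e : rel T) (k : nat) : Prop :=
  forall x y : T, dist_le e x y k.

(* Directed graph: arc relation a on T; arcs are pairs (u,v) with a u v.
   The bidirected graph of G has arc set {(x,y) | e x y}, since e is symmetric. *)
Definition arcs (T : finType) (a : rel T) : {set T * T} :=
  [set uv | a uv.1 uv.2].

Definition indeg_le1 (T : finType) (F : {set T * T}) : bool :=
  [forall v : T, #|[set uv in F | uv.2 == v]| <= 1].

Definition acyclic_arcs (T : finType) (F : {set T * T}) : bool :=
  [forall uv in F, ~~ connect (fun x y => (x, y) \in F) uv.2 uv.1].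

(* Faces of the complex of directed trees Delta(D): edge sets of directed forests. *)
Definition dtree_face (T : finType) (a : rel T) (F : {set T * T}) : bool :=
  [&& F \subset arcs a, indeg_le1 F & acyclic_arcs F].

Definition maximal_face (T : finType) (a : rel T) (F : {set T * T}) : Prop :=
  dtree_face a F /\ forall F', dtree_face a F' -> F \subset F' -> F' = F.

Definition pure_dtree_complex (T : finType) (a : rel T) : Prop :=
  forall F1 F2, maximal_face a F1 -> maximal_face a F2 -> #|F1| = #|F2|.

(* Main.v *)
Require Import Defs.
From mathcomp Require Import all_boot.
From mathcomp Require Import zify.
Set Implicit Arguments. Unset Strict Implicit. Unset Printing Implicit Defensive.

Section S.
Variable T : finType.
Implicit Types F : {set T * T}.

Definition R F : rel T := fun x y => (x, y) \in F.
Definition root F v := forall u, (u, v) \notin F.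

Lemma faceP (e : rel T) F : dtree_face e F ->
  [/\ forall u v, (u,v) \in F -> e u v,
      forall u1 u2 v, (u1,v) \in F -> (u2,v) \in F -> u1 = u2 &
      forall u v, (u,v) \in F -> ~~ connect (R F) v u].
Proof.
case/and3P => sub /forallP ind /forall_inP ac; split.
- by move=> u v /(subsetP sub); rewrite inE.
- move=> u1 u2 v h1 h2. have /card_le1_eqP H := ind v.
  have := H (u1,v) (u2,v); rewrite !inE h1 h2 eqxx => /(_ isT isT).
  by case.
- move=> u v h; exact: (ac (u,v) h).
Qed.

Lemma faceI (e : rel T) F : (forall u v, (u,v) \in F -> e u v) ->
  (forall u1 u2 v, (u1,v) \in F -> (u2,v) \in F -> u1 = u2) ->
  (forall u v, (u,v) \in F -> ~~ connect (R F) v u) -> dtree_face e F.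
Proof.
move=> H1 H2 H3; apply/and3P; split.
- apply/subsetP => [[u v]] h; rewrite inE; exact: H1.
- apply/forallP => v; apply/card_le1_eqP => -[u1 v1] [u2 v2].
  rewrite !inE => /andP[h1 /eqP /= E1] /andP[h2 /eqP /= E2]; subst.
  by rewrite (H2 _ _ _ h1 h2).
- apply/forall_inP => [[u v]] h; exact: H3.
Qed.

Lemma rank_acyc F (h : T -> nat) : (forall u v, (u,v) \in F -> h u < h v) ->
  forall u v, (u,v) \in F -> ~~ connect (R F) v u.
Proof.
move=> H u v uv; apply/negP => /connectP [p pth lst].
have: h v <= h u.
  elim: p v pth lst {uv} => [|z p IH] w /=; first by move=> _ ->.
  case/andP => wz pth lst. apply: leq_trans (IH _ pth lst). exact: ltnW (H _ _ wz).
by rewrite leqNgt H.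
Qed.

Lemma root_reach F v x : root F v -> connect (R F) x v -> x = v.
Proof.
move=> rv /connectP [p]; case/lastP: p => [|q z] /=; first by move=> _ ->.
rewrite rcons_path last_rcons => /andP[_ arc] E; subst z.
by have := rv (last x q); rewrite /R in arc; rewrite arc.
Qed.

Lemma two_roots (e : rel T) F a b w : dtree_face e F -> root F a -> root F b ->
  connect (R F) a w -> connect (R F) b w -> a = b.
Proof.
case/faceP => _ inj _ ra rb /connectP [p].
elim/last_ind: p w => [|q z IH] w /=.
  by move=> _ -> /(root_reach ra).
rewrite rcons_path last_rcons => /andP[pq arc] -> {w}.
move/connectP => [r]; case/lastP: r => [|r' z'] /=.
  by move=> _ E; subst; have := rb (last a q); rewrite /R in arc; rewrite arc.
rewrite rcons_path last_rcons => /andP[pr arc'] E; subst z'.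
apply: (IH (last a q) pq erefl).
have -> := inj _ _ _ arc arc'.
by apply/connectP; exists r'.
Qed.

Lemma connect_add F u v x y : connect (R ((u,v) |: F)) x y ->
  connect (R F) x y \/ (connect (R F) x u /\ connect (R F) v y).
Proof.
case/connectP => p; elim: p x => [|z p IH] x /=; first by move=> _ ->; left.
case/andP => xz pth /(IH _ pth) {IH pth}.
rewrite /R !inE in xz. case/orP: xz => [/eqP [-> ->]|xz].
- by move=> [h|[_ h]]; right; split.
- have c := @connect1 _ (R F) _ _ xz.
  move=> [h|[h1 h2]]; [left|right; split=> //]; exact: connect_trans c _.
Qed.

Lemma add_face (e : rel T) F u v : dtree_face e F -> e u v -> root F v ->
  ~~ connect (R F) v u -> dtree_face e ((u,v) |: F).
Proof.
case/faceP => H1 H2 H3 euv rv nc. apply: faceI.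
- by move=> a b; rewrite in_setU1 => /orP[/eqP[-> ->] //|]; exact: H1.
- move=> a1 a2 b; rewrite !in_setU1 => /orP[/eqP[E1 E2]|h1] /orP[/eqP[E3 E4]|h2]; subst.
  + by [].
  + by move: (rv a2); rewrite h2.
  + by move: (rv a1); rewrite h1.
  + exact: H2 h1 h2.
- move=> a b; rewrite in_setU1 => h; apply/negP => /connect_add [h'|[h1 h2]].
  + case/orP: h => [/eqP[? ?]|h]; first by subst; rewrite h' in nc.
    by move: (H3 _ _ h); rewrite h'.
  + case/orP: h => [/eqP[? ?]|h]; first by subst; rewrite h1 in nc.
    have : connect (R F) v u.
      apply: connect_trans h2 _; apply: connect_trans (connect1 _) h1; exact: h.
    by rewrite (negbTE nc).
Qed.

Lemma max_ext (e : rel T) F u v : maximal_face e F -> e u v -> root F v -> connect (R F) v u.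
Proof.
case=> fF mx euv rv; apply/idPn => nc.
have := mx _ (add_face fF euv rv nc) (subsetUr _ _).
move/setP/(_ (u,v)); rewrite !inE eqxx /= => h.
by have := rv u; rewrite -h.
Qed.

Lemma root_exists (e : rel T) F (x0 : T) : dtree_face e F -> exists r, root F r.
Proof.
case/faceP => _ _ ac.
pose anc v := [set w | connect (R F) w v].
case: (@arg_minnP _ x0 predT (fun v => #|anc v|) isT) => r _ H.
exists r => u; apply/negP => ur.
have : #|anc u| < #|anc r|.
  apply: proper_card; apply/properP; split.
    apply/subsetP => w; rewrite !inE => wu.
    by apply: connect_trans wu (connect1 _); exact: ur.
  by exists r; rewrite !inE ?connect0 // (ac _ _ ur).
by rewrite ltnNge H.
Qed.

Lemma card_heads (e : rel T) F : dtree_face e F -> #|F| = #|[set uv.2 | uv in F]|.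
Proof.
case/faceP => _ inj _; rewrite card_in_imset // => [[a b]] [c d] h1 h2 /= E.
by subst; rewrite (inj _ _ _ h1 h2).
Qed.

Lemma card_root (e : rel T) F r : dtree_face e F -> root F r ->
  (forall v, v != r -> exists u, (u,v) \in F) -> #|F| = #|T|.-1.
Proof.
move=> fF rr H; rewrite (card_heads fF) -(cardsC1 r); apply: eq_card => v.
rewrite !inE; case: eqP => [->|/eqP nv].
  by apply/imsetP => -[[a b] h /= E]; subst; move: (rr a); rewrite h.
by have [u h] := H v nv; apply/imsetP; exists (u,v).
Qed.

Lemma card_lt (e : rel T) F r : dtree_face e F -> root F r -> #|F| <= #|T|.-1.
Proof.
move=> fF rr; rewrite (card_heads fF) -(cardsC1 r); apply: subset_leq_card.
apply/subsetP => v /imsetP [[a b] h /= ->]; rewrite !inE.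
by apply/eqP => E; subst; move: (rr a); rewrite h.
Qed.

Lemma card_two (e : rel T) F r1 r2 : dtree_face e F -> root F r1 -> root F r2 -> r1 != r2 ->
  #|F| <= #|T| - 2.
Proof.
move=> fF rr1 rr2 n12; rewrite (card_heads fF).
have -> : 2 = #|[set r1; r2]| by rewrite cards2 n12.
have -> : #|T| - #|[set r1; r2]| = #|~: [set r1; r2]|.
  by rewrite (cardsCs (~: [set r1; r2])) setCK.
apply: subset_leq_card.
apply/subsetP => v /imsetP [[a b] h /= ->]; rewrite !inE.
by apply/norP; split; apply/eqP => E; subst; [move: (rr1 a)|move: (rr2 a)]; rewrite h.
Qed.


Lemma cross (e : rel T) (S : {set T}) x y : connect e x y -> x \in S -> y \notin S ->
  exists u v, [/\ e u v, u \in S & v \notin S].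
Proof.
case/connectP => p; elim: p x => [|z p IH] x /=.
  by move=> _ -> xS; rewrite xS.
case/andP => xz pth lst xS yS. case: (boolP (z \in S)) => zS.
  exact: IH pth lst zS yS.
by exists x, z.
Qed.

Lemma conn_mono F F' x y : F \subset F' -> connect (R F) x y -> connect (R F') x y.
Proof.
move=> sub; apply: connect_sub => a b ab; apply: connect1.
exact: (subsetP sub).
Qed.

Lemma spanning (e : rel T) (x : T) : simple_graph e -> connected_graph e ->
  exists F, maximal_face e F /\ #|F| = #|T|.-1.
Proof.
move=> [sym irr] conn.
pose I F := [&& dtree_face e F, [forall w, (w,x) \notin F] &
                [forall uv in F, connect (R F) x uv.1]].
have I0 : I set0.
  apply/and3P; split.
  - by apply: faceI => [u v|u1 u2 v|u v]; rewrite in_set0.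
  - by apply/forallP => w; rewrite inE.
  - by apply/forall_inP => uv; rewrite inE.
case: (@arg_maxnP _ set0 I (fun F => #|F|) I0) => F IF maxF.
case/and3P: IF => fF /forallP rx /forall_inP reach.
have rootx : root F x by move=> u; exact: rx u.
have allreach : forall v, connect (R F) x v.
  move=> v; apply/idPn => nv.
  pose S := [set w | connect (R F) x w].
  have [u [w [euw uS wS]]] : exists u v, [/\ e u v, u \in S & v \notin S].
    by apply: (cross (conn x v)); rewrite !inE ?connect0.
  rewrite !inE in uS wS.
  have rw : root F w.
    move=> a; apply/negP => aw.
    have := reach _ aw; rewrite /= => xa.
    by move: wS; rewrite (connect_trans xa (connect1 _)).
  have nc : ~~ connect (R F) w u.
    apply/negP => wu. have E := two_roots fF rw rootx wu uS.
    by subst; rewrite connect0 in wS.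
  have fF' := add_face fF euw rw nc.
  have sub : F \subset (u,w) |: F by apply: subsetUr.
  have IF' : I ((u,w) |: F).
    apply/and3P; split => //.
    - apply/forallP => a; rewrite in_setU1 negb_or rx andbT.
      apply/eqP => -[_ E]; subst; by rewrite connect0 in wS.
    - apply/forall_inP => -[a b]; rewrite in_setU1 => /orP [/eqP[-> _]| h] /=.
        exact: conn_mono sub uS.
      exact: conn_mono sub (reach _ h).
  have := maxF _ IF'; rewrite cardsU1.
  have -> : (u, w) \notin F by apply: rw.
  move=> /= H; lia.
have cardF : #|F| = #|T|.-1.
  apply: (card_root fF rootx) => v vx.
  have /connectP [p] := allreach v.
  case/lastP: p => [|q z] /=; first by move=> _ E; rewrite E eqxx in vx.
  rewrite rcons_path last_rcons => /andP[_ arc] ->.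
  by exists (last x q).
exists F; split => //; split => // F' fF' sub.
apply/eqP; rewrite eq_sym eqEcard sub /= cardF.
have [r rr] := root_exists x fF'.
exact: card_lt fF' rr.
Qed.

Lemma roots_eq (e : rel T) F r1 r2 : simple_graph e -> diam_le e 2 ->
  maximal_face e F -> root F r1 -> root F r2 -> r1 = r2.
Proof.
move=> [sym irr] dm mF r1r r2r. have [p [pth lst sz]] := dm r1 r2.
case: p pth lst sz => [|z [|w [|]]] //=.
- rewrite andbT => e1z E _; subst z.
  by have := root_reach r1r (max_ext mF e1z r2r).
- move=> /and3P[e1z ezw _] E _; subst w.
  have c1 : connect (R F) r1 z by apply: (max_ext mF) => //; rewrite sym.
  have c2 : connect (R F) r2 z by apply: (max_ext mF).
  exact: (two_roots mF.1 r1r r2r c1 c2).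
Qed.

End S.

Theorem mainTheorem5 (T : finType) (e : rel T) :
  simple_graph e -> connected_graph e ->
  (pure_dtree_complex e <-> diam_le e 2).
Proof.
move=> sg conn; have [sym irr] := sg; split.
- move=> pure x y.
  case: (eqVneq x y) => [<-|nxy]; first by exists [::].
  case: (boolP (e x y)) => exy; first by exists [:: y]; rewrite /= exy.
  case: (boolP [exists w, e x w && e w y]) => [/existsP[w /andP[h1 h2]]|nw].
    by exists [:: w; y]; rewrite /= h1 h2.
  exfalso.
  pose F0 := [set uv | ((uv.1 == x) && e x uv.2) || ((uv.1 == y) && e y uv.2)].
  have nxb : forall b, e x b -> e y b -> False.
    move=> b h1 h2; move/existsP: nw; apply; exists b; by rewrite h1 sym h2.
  have fF0 : dtree_face e F0.
    apply: faceI.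
    - by move=> a b; rewrite inE /= => /orP[]/andP[/eqP-> //].
    - move=> a1 a2 b; rewrite !inE /= => /orP[]/andP[/eqP-> h1] /orP[]/andP[/eqP-> h2] //.
      + by case: (nxb b).
      + by case: (nxb b).
    - apply: (@rank_acyc _ _ (fun v => if (v == x) || (v == y) then 0 else 1)).
      move=> a b; rewrite inE /= => /orP[]/andP[/eqP-> h]; rewrite eqxx /=.
      + have -> : (b == x) = false by apply/eqP => E; subst; rewrite irr in h.
        have -> : (b == y) = false by apply/eqP => E; subst; rewrite h in exy.
        by [].
      + rewrite orbT.
        have -> : (b == x) = false by apply/eqP => E; subst; rewrite sym h in exy.
        have -> : (b == y) = false by apply/eqP => E; subst; rewrite irr in h.
        by [].
  pose P F := dtree_face e F && (F0 \subset F).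
  have P0 : P F0 by rewrite /P fF0 subxx.
  case: (@arg_maxnP _ F0 P (fun F => #|F|) P0) => F /andP[fF sub] maxF.
  have mF : maximal_face e F.
    split => // F' fF' sF.
    apply/eqP; rewrite eq_sym eqEcard sF /=.
    by apply: maxF; rewrite /P fF' (subset_trans sub sF).
  have rt : forall z, z \in [:: x; y] -> root F z.
    move=> z zin u; apply/negP => uz.
    case/faceP: fF => H1 _ H3.
    have ezu : e z u by rewrite sym; exact: H1 _ _ uz.
    have : (z, u) \in F.
      apply: (subsetP sub); rewrite inE /=.
      by move: zin; rewrite !inE => /orP[]/eqP E; subst z; rewrite ?eqxx ezu ?orbT.
    move=> zu; move: (H3 _ _ uz); by rewrite (@connect1 _ (R F) _ _ zu).
  have yin : y \in [:: x; y] by rewrite !inE eqxx orbT.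
  have c1 := card_two fF (rt x (mem_head _ _)) (rt y yin) nxy.
  have [Fs [ms cs]] := spanning x sg conn.
  have := pure _ _ mF ms; rewrite cs => E.
  have c2 : 2 <= #|T|.
    by have := max_card (mem [set x; y]); rewrite cards2 nxy.
  lia.
- move=> dm F1 F2 m1 m2.
  suffices H : forall F, maximal_face e F -> #|F| = #|T|.-1 by rewrite !H.
  move=> F mF; have fF := mF.1.
  case: (pickP (@predT T)) => [x0 _|T0].
  + have [r rr] := root_exists x0 fF.
    apply: (card_root fF rr) => v vr.
    case: (boolP [exists u, (u, v) \in F]) => [/existsP//|/existsPn nv].
    have rv : root F v by move=> u; exact: nv u.
    by rewrite (roots_eq sg dm mF rr rv) eqxx in vr.
  + have T00 : #|T| = 0 by apply: eq_card0.
    have := max_card (mem F); rewrite card_prod T00 /=.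
    by rewrite leqn0 => /eqP ->.
Qed.
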